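(* Assume $n\ge 2$ and $\chi\neq\{0\}$. The reshuffling property and the source-anonymous contributions property are independent: there exists a risk-sharing rule on $\chi^n$ that satisfies the reshuffling property but does not have source-anonymous contributions, and there exists a risk-sharing rule on $\chi^n$ that has source-anonymous contributions but does not satisfy the reshuffling property.
   Context: Fix a probability space $(\Omega,\mathcal{F},\mathbb{P})$ and an integer $n$. Let $\chi$ be a convex cone of non-negative random variables on this space (closed under addition and under multiplication by positive scalars) with $0\in\chi$. Equalities between random variables are understood almost surely. A pool is a vector $\boldsymbol{X}=(X_1,\ldots,X_n)\in\chi^n$, with aggregate loss $S_{\boldsymbol{X}}=\sum_{i=1}^n X_i$. A risk-sharing (RS) rule is a mapping $\boldsymbol{C}$ assigning to every pool $\boldsymbol{X}\in\chi^n$ a vector $\boldsymbol{C}[\boldsymbol{X}]=(C_1[\boldsymbol{X}],\ldots,C_n[\boldsymbol{X}])$ of real-valued random variables satisfying $\sum_{i=1}^n C_i[\boldsymbol{X}]=S_{\boldsymbol{X}}$. For a permutation $\pi$ of $\{1,\ldots,n\}$, $\boldsymbol{X}^\pi=(X_{\pi(1)},\ldots,X_{\pi(n)})$. Reshuffling property: $C_i[\boldsymbol{X}^\pi]=C_{\pi(i)}[\boldsymbol{X}]$ for all pools $\boldsymbol{X}$, permutations $\pi$ and indices $i$. Source-anonymous contributions: $C_i[\boldsymbol{X}^\pi]=C_i[\boldsymbol{X}]$ for all pools $\boldsymbol{X}$, permutations $\pi$ and indices $i$. *)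

(* Defs.v *)
From HB Require Import structures.
From mathcomp Require Import all_boot all_order all_algebra.
From mathcomp Require Import fingroup perm.
From mathcomp Require Import all_classical all_reals all_analysis.
Set Implicit Arguments. Unset Strict Implicit. Unset Printing Implicit Defensive.
Import Order.TTheory GRing.Theory Num.Theory.
Local Open Scope classical_set_scope.
Local Open Scope ring_scope.

Section RiskSharing.
Context {d : measure_display} {T : measurableType d} {R : realType}.
Variable P : probability T R.

Definition aeq (f g : T -> R) : Prop := {ae P, forall w, f w = g w}.

Definition is_cone (chi : set (T -> R)) : Prop :=
  [/\ (forall X, chi X -> measurable_fun setT X),
      (forall X, chi X -> {ae P, forall w, 0 <= X w}),
      chi (fun _ => 0),
      (forall X Y, chi X -> chi Y -> chi (fun w => X w + Y w)) &
      (forall (c : R) X, 0 < c -> chi X -> chi (fun w => c * X w))].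

Definition nontrivial (chi : set (T -> R)) : Prop :=
  exists X, chi X /\ ~ aeq X (fun _ => 0).

Definition pool (n : nat) := 'I_n -> T -> R.
Definition in_pool (chi : set (T -> R)) n (X : pool n) : Prop := forall i, chi (X i).

Definition permute n (X : pool n) (pi : 'S_n) : pool n := fun i => X (pi i).

Definition aggregate n (X : pool n) : T -> R := fun w => \sum_(i < n) X i w.

Definition RS_rule (chi : set (T -> R)) n (C : pool n -> pool n) : Prop :=
  forall X, in_pool chi X ->
    (forall i, measurable_fun setT (C X i)) /\ aeq (aggregate (C X)) (aggregate X).

Definition reshuffling (chi : set (T -> R)) n (C : pool n -> pool n) : Prop :=
  forall X (pi : 'S_n) i, in_pool chi X -> aeq (C (permute X pi) i) (C X (pi i)).

Definition source_anonymous (chi : set (T -> R)) n (C : pool n -> pool n) : Prop :=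
  forall X (pi : 'S_n) i, in_pool chi X -> aeq (C (permute X pi) i) (C X i).

End RiskSharing.

(* Main.v *)
Require Import Defs.
From HB Require Import structures.
From mathcomp Require Import all_boot all_order all_algebra.
From mathcomp Require Import fingroup perm.
From mathcomp Require Import all_classical all_reals all_analysis.
Set Implicit Arguments. Unset Strict Implicit. Unset Printing Implicit Defensive.
Import Order.TTheory GRing.Theory Num.Theory.
Local Open Scope ring_scope.

Lemma aeq_sym (d : measure_display) (T : measurableType d) (R : realType)
  (P : probability T R) (f g : T -> R) : aeq P f g -> aeq P g f.
Proof.
by rewrite /aeq; apply: filterS => w ->.
Qed.

Lemma aeq_refl (d : measure_display) (T : measurableType d) (R : realType)
  (P : probability T R) (f g : T -> R) : (forall w, f w = g w) -> aeq P f g.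
Proof. by move=> H; apply: aeW. Qed.

Theorem proposition2 (d : measure_display) (T : measurableType d) (R : realType)
  (P : probability T R) (chi : set (T -> R)) (n : nat) :
  (2 <= n)%N -> is_cone P chi -> nontrivial P chi ->
  (exists C : pool n -> pool n,
      RS_rule P chi C /\ reshuffling P chi C /\ ~ source_anonymous P chi C) /\
  (exists C : pool n -> pool n,
      RS_rule P chi C /\ source_anonymous P chi C /\ ~ reshuffling P chi C).
Proof.
case: n => [|[|n]] // _ [mchi _ chi0 _ _] [X0 [cX0 nX0]].
pose i1 : 'I_n.+2 := Ordinal (isT : (1 < n.+2)%N).
pose X : @pool d T R n.+2 := fun i => if i == ord0 then X0 else (fun _ => 0).
have XP : in_pool chi X by move=> i; rewrite /X; case: ifP.
have Xi1 : X i1 = (fun _ => 0) by rewrite /X.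
have Xi0 : X ord0 = X0 by rewrite /X eqxx.
have aggX : forall w, aggregate X w = X0 w.
  move=> w; rewrite /aggregate big_ord_recl /X eqxx /= big1 ?addr0 //.
split.
- exists id; split; [|split].
  + move=> Y HY; split; first by move=> i; exact: mchi.
    exact: aeq_refl.
  + move=> Y pi i _; exact: aeq_refl.
  + move=> H; have := H X (tperm ord0 i1) ord0 XP.
    rewrite /permute /= tpermL Xi1 Xi0 => /aeq_sym; exact: nX0.
- pose C : @pool d T R n.+2 -> @pool d T R n.+2 :=
    fun Y i => if i == ord0 then aggregate Y else (fun _ => 0).
  have aggC : forall Y w, aggregate (C Y) w = aggregate Y w.
    move=> Y w; rewrite /aggregate big_ord_recl /C eqxx /= big1 ?addr0 //.
  exists C; split; [|split].
  + move=> Y HY; split; last exact: aeq_refl.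
    move=> i; rewrite /C; case: ifP => _; last exact: measurable_cst.
    by apply: measurable_sum => j; exact: mchi.
  + move=> Y pi i _; apply: aeq_refl => w; rewrite /C; case: ifP => // _.
    rewrite /aggregate /permute.
    by rewrite [RHS](reindex_inj (@perm_inj _ pi)).
  + move=> H; have := H X (tperm ord0 i1) i1 XP.
    rewrite tpermR => H'.
    have E1 : C (permute X (tperm ord0 i1)) i1 = (fun _ => 0) by [].
    have E0 : C X ord0 = aggregate X by rewrite /C eqxx.
    rewrite E1 E0 in H'.
    apply: nX0; move: H'; apply: filterS.
    by move=> w; rewrite aggX.
Qed.
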